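(* Let $n\ge2$, $k\ge1$, and let $\partial_k$ denote the distance in $H_{n,k}$. For every vertex $\mathbf x=x_1\ldots x_k$ of $H_{n,k}$: $$\partial_k(\mathbf x,\mathbf r)\le\begin{cases}k-1&\text{if }x_1=0,\\ k&\text{otherwise,}\end{cases}\qquad \partial_k(\mathbf x,P)\le\begin{cases}k&\text{if }x_1=0,\\ k-1&\text{otherwise.}\end{cases}$$
   Context: Let $n\ge 2$ and $k\ge 1$ be integers. $H_{n,k}$ is the simple undirected graph with vertex set $V_{n,k}=\mathbb{Z}_n^k$ (so $|V_{n,k}|=n^k$), whose vertices are written as strings $x_1x_2\ldots x_k$ with $x_j\in\mathbb{Z}_n=\{0,1,\ldots,n-1\}$. Two distinct vertices are adjacent if and only if they are related by one of the following rules. For $i=0$ the prefix $x_1\ldots x_i$ is empty, and ''$0\ldots0$'' denotes a string of zeros completing the word to length $k$. (R1) $x_1\ldots x_{k-1}x_k\sim x_1\ldots x_{k-1}y_k$ whenever $y_k\neq x_k$. (R2) For $0\le i\le k-2$: $x_1\ldots x_i0\ldots0\sim x_1\ldots x_ix_{i+1}\ldots x_k$ whenever $x_j\neq 0$ for all $i+1\le j\le k$. (R3) For $1\le i\le k-1$: $x_1\ldots x_{i-1}x_i0\ldots0\sim x_1\ldots x_{i-1}y_i0\ldots0$ whenever $x_i,y_i\neq0$ and $x_i\ne y_i$. In particular, $H_{n,1}$ is the complete graph $K_n$. The root of $H_{n,k}$ is $\mathbf r=00\ldots0$; a vertex of $H_{n,k}$ is peripheral if all its coordinates are nonzero, and $P$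 denotes the set of peripheral vertices. For a vertex $\mathbf x$ and a vertex set $U$, $\partial(\mathbf x,U)=\min_{\mathbf u\in U}\partial(\mathbf x,\mathbf u)$. *)

(* Defs.v *)
From mathcomp Require Import all_boot.
Set Implicit Arguments. Unset Strict Implicit. Unset Printing Implicit Defensive.

(* Vertices of H_{n,k}: words x_1...x_k over Z_n, encoded as finite functions
   'I_k -> 'I_n; coordinate x_{j+1} is (x j) for j : 'I_k (0-indexed positions). *)
Definition vert (n k : nat) := {ffun 'I_k -> 'I_n}.

Definition R1 n k (x y : vert n k) : bool :=
  (x != y) && [forall j : 'I_k, (j.+1 < k) ==> (x j == y j)].

(* (R2), oriented: u = x_1..x_i 0..0 and v = x_1..x_i x_{i+1}..x_k with all
   x_{i+1},..,x_k nonzero, for some prefix length i with 0 <= i <= k-2. *)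
Definition R2 n k (u v : vert n k) : bool :=
  [exists i : 'I_k.+1, (i.+2 <= k) &&
    [forall j : 'I_k, if j < i then u j == v j
                      else (val (u j) == 0) && (val (v j) != 0)]].

(* (R3): x_1..x_{i-1} x_i 0..0 ~ x_1..x_{i-1} y_i 0..0 with x_i, y_i nonzero,
   distinct, 1 <= i <= k-1.  Here p = i-1 is the 0-indexed position, p <= k-2. *)
Definition R3 n k (x y : vert n k) : bool :=
  [exists p : 'I_k, (p.+2 <= k) &&
    [&& val (x p) != 0, val (y p) != 0, x p != y p &
    [forall j : 'I_k, if j < p then x j == y j
                      else (p < j) ==> ((val (x j) == 0) && (val (y j) == 0))]]].

Definition Hadj n k : rel (vert n k) :=
  fun x y => [|| R1 x y, R2 x y, R2 y x | R3 x y].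

Fixpoint within (T : finType) (e : rel T) (m : nat) (x y : T) : bool :=
  if m is m'.+1 then (x == y) || [exists z, e x z && within e m' z y]
  else x == y.

(* dist e x y = least m such that y is reachable from x in at most m steps;
   if y is unreachable it returns #|T| (larger than any finite distance). *)
Definition dist (T : finType) (e : rel T) (x y : T) : nat :=
  find (fun m => within e m x y) (iota 0 #|T|).

Definition dist_set (T : finType) (e : rel T) (x : T) (U : {set T}) : nat :=
  \big[minn/#|T|]_(u in U) dist e x u.

Definition rootset n k : {set vert n k} :=
  [set x : vert n k | [forall j : 'I_k, val (x j) == 0]].

Definition periph n k : {set vert n k} :=
  [set x : vert n k | [forall j : 'I_k, val (x j) != 0]].

Definition first_zero n k (x : vert n k) : bool :=
  [forall j : 'I_k, (val j == 0) ==> (val (x j) == 0)].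

(* Main.v *)
Require Import Defs.
From mathcomp Require Import all_boot.

Lemma within_mono (T : finType) (e : rel T) a b x y :
  a <= b -> within e a x y -> within e b x y.
Proof.
elim: b a x => [|b IH] [|a] x //=.
- by move=> _ ->.
- move=> hab /orP [->//|/existsP [z /andP [hz hw]]].
  apply/orP; right; apply/existsP; exists z; rewrite hz /=.
  exact: IH hw.
Qed.

Lemma within_trans (T : finType) (e : rel T) a b x y z :
  within e a x y -> within e b y z -> within e (a + b) x z.
Proof.
elim: a x => [|a IH] x /=.
- by move/eqP ->; rewrite add0n.
- move=> /orP [/eqP -> h|/existsP [w /andP [hw hw']] h].
  + have h2 : within e (a + b).+1 y z.
      apply: within_mono h; exact: leq_trans (leq_addl a b) (leqnSn _).
    exact: h2.
  + apply/orP; right; apply/existsP; exists w.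
    by rewrite hw /=; apply: IH h.
Qed.

Lemma within_edge (T : finType) (e : rel T) x y : e x y -> within e 1 x y.
Proof. move=> h /=; apply/orP; right; apply/existsP; exists y; by rewrite h eqxx. Qed.

Lemma dist_le (T : finType) (e : rel T) m x y :
  m < #|T| -> within e m x y -> dist e x y <= m.
Proof.
move=> hm hw; rewrite leqNgt; apply/negP => hlt.
have := before_find 0 hlt; by rewrite nth_iota // add0n hw.
Qed.

Lemma bigmin_le_seq (I : eqType) (r : seq I) (P : pred I) (F : I -> nat) N u :
  u \in r -> P u -> \big[minn/N]_(i <- r | P i) F i <= F u.
Proof.
elim: r => [//|a r IH]; rewrite inE big_cons => /orP [/eqP <- ->|hu hP].
- exact: geq_minl.
- case: (P a); last exact: IH.
  by rewrite geq_min (IH hu hP) orbT.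
Qed.

Lemma dist_set_le (T : finType) (e : rel T) x (U : {set T}) u m :
  u \in U -> m < #|T| -> within e m x u -> dist_set e x U <= m.
Proof.
move=> hu hm hw; apply: (@leq_trans (dist e x u)); last exact: dist_le hm hw.
rewrite /dist_set; apply: bigmin_le_seq => //; exact: mem_index_enum.
Qed.

Definition fill n k (x : vert n k) (s : nat) (c : 'I_n) : vert n k :=
  [ffun j : 'I_k => if j < s then x j else c].
Arguments fill {n k}.

Lemma R2_fill {n k} (x y : vert n k) (s : 'I_k) (z0 : 'I_n) :
  val z0 = 0 -> s.+2 <= k ->
  [forall j : 'I_k, if j < s then y j == x j else val (y j) != 0] ->
  R2 (fill x s z0) y.
Proof.
move=> hz hs /forallP hy; apply/existsP; exists (widen_ord (leqnSn k) s).
rewrite /= hs /=; apply/forallP => j; rewrite ffunE.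
have := hy j; case: ifP => _ h; first by rewrite eq_sym.
by rewrite hz eqxx h.
Qed.

Lemma Hadj_R2l {n k} (u v : vert n k) : R2 u v -> Hadj u v.
Proof. by move=> h; rewrite /Hadj h orbT. Qed.
Lemma Hadj_R2r {n k} (u v : vert n k) : R2 v u -> Hadj u v.
Proof. by move=> h; rewrite /Hadj h !orbT. Qed.
Lemma Hadj_R1 {n k} (u v : vert n k) : R1 u v -> Hadj u v.
Proof. by move=> h; rewrite /Hadj h. Qed.

Lemma claim {n k} (z0 o1 : 'I_n) (hz : val z0 = 0) (ho : val o1 != 0) m :
  forall (s : 'I_k), s + m.+1 = k -> forall x : vert n k,
  within (@Hadj n k) (if val (x s) == 0 then m else m.+1) x (fill x s z0) /\
  exists2 y : vert n k,
    [forall j : 'I_k, if j < s then y j == x j else val (y j) != 0] &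
    within (@Hadj n k) (if val (x s) == 0 then m.+1 else m) x y.
Proof.
elim: m => [|m IH] s hsk x.
- have hj : forall j : 'I_k, ~~ (j < s) -> j = s.
    move=> j hj; apply: val_inj => /=.
    have hjk : (j : nat) < s + 1 by rewrite hsk.
    move: hjk; rewrite addn1 ltnS.
    by rewrite leq_eqVlt ltnNge leqNgt (negbTE hj) orbF => /eqP.
  have R1f : forall c : 'I_n, x s != c -> R1 x (fill x s c).
    move=> c hc; rewrite /R1; apply/andP; split.
      apply/eqP => h; have := congr1 (fun f : vert n k => f s) h.
      by rewrite ffunE ltnn => e; rewrite e eqxx in hc.
    apply/forallP => j; apply/implyP => hj1; rewrite ffunE.
    have -> : j < s by rewrite -ltnS -(addn1 s) hsk.
    by [].
  case: ifP => h0.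
  + split.
    * have -> : fill x s z0 = x.
        apply/ffunP => j; rewrite ffunE; case: ifP => // /negbT /hj ->.
        by apply: val_inj; rewrite hz (eqP h0).
      by rewrite /= eqxx.
    * exists (fill x s o1).
        apply/forallP => j; rewrite ffunE; case: (j < s); rewrite ?eqxx //.
      apply: within_edge; apply: Hadj_R1; apply: R1f.
      apply/eqP => e; by rewrite e (negbTE ho) in h0.
  + split.
    * apply: within_edge; apply: Hadj_R1; apply: R1f.
      apply/eqP => e; by rewrite e hz eqxx in h0.
    * exists x; last by rewrite /= eqxx.
      apply/forallP => j; case: ifP => // /negbT /hj ->; by rewrite h0.
- have hs1 : s.+1 < k.
    have : (s : nat).+1 < s + m.+2 by rewrite -addn1 ltn_add2l.
    by rewrite hsk.
  set s' := Ordinal hs1.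
  have hs'k : s' + m.+1 = k by rewrite /= addSnnS.
  have [IHr [y hy hwy]] := IH s' hs'k x.
  have hs2 : s.+2 <= k by [].
  case: ifP => h0.
  + have hf : fill x s' z0 = fill x s z0.
      apply/ffunP => j; rewrite !ffunE /= ltnS leq_eqVlt.
      case: eqP => [/val_inj ->|_] /=; last by [].
      by rewrite ltnn; apply: val_inj; rewrite hz (eqP h0).
    rewrite hf in IHr.
    have hr : within (@Hadj n k) m.+1 x (fill x s z0).
      apply: within_mono IHr; by case: ifP.
    split => //.
    exists (fill x s o1).
      apply/forallP => j; rewrite ffunE; case: (j < s); rewrite ?eqxx //.
    rewrite -addn1; apply: within_trans hr _.
    apply: within_edge; apply: Hadj_R2l; apply: R2_fill => //.
    apply/forallP => j; rewrite ffunE; case: (j < s); rewrite ?eqxx //.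
  + have hy' : [forall j : 'I_k, if j < s then y j == x j else val (y j) != 0].
      apply/forallP => j; move/forallP: hy => /(_ j) /=.
      case: (ltngtP j s) => [hlt|hgt|heq].
      * by rewrite ltnW.
      * by rewrite ltnNge hgt.
      * have hjs : j = s := val_inj heq. rewrite hjs ltnSn => /eqP ->; by rewrite h0.
    have hw : within (@Hadj n k) m.+1 x y.
      apply: within_mono hwy; case: ifP => //.
    split; last by exists y => //.
    rewrite -addn1; apply: within_trans hw _.
    apply: within_edge; apply: Hadj_R2r; exact: R2_fill.
Qed.

Theorem mainTheorem6 (n k : nat) (hn : 2 <= n) (hk : 1 <= k) (x : vert n k) :
  dist_set (@Hadj n k) x (rootset n k) <= (if first_zero x then k - 1 else k)
  /\ dist_set (@Hadj n k) x (periph n k) <= (if first_zero x then k else k - 1).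
Proof.
have hn0 : 0 < n by apply: leq_trans hn.
set z0 : 'I_n := Ordinal hn0.
set o1 : 'I_n := Ordinal hn.
set s : 'I_k := Ordinal hk.
have hsk : s + (k.-1).+1 = k by rewrite /= add0n prednK.
have [hr [y hy hwy]] := claim z0 o1 erefl isT (k.-1) s hsk x.
have hfz : first_zero x = (val (x s) == 0).
  apply/forallP/idP => [H|h j].
    by have /implyP := H s; apply.
  apply/implyP => hj; have -> : j = s by apply: val_inj; rewrite /= (eqP hj).
  exact: h.
have hcard : k < #|vert n k|.
  rewrite card_ffun !card_ord; apply: leq_trans (ltn_expl k (isT : 1 < 2)) _.
  by rewrite leq_exp2r.
have hk1 : k.-1 = k - 1 by rewrite subn1.
rewrite hfz; split.
- apply: (@dist_set_le _ _ _ _ (fill x s z0)).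
  + rewrite inE; apply/forallP => j; rewrite ffunE /=.
    by [].
  + case: ifP => _; last exact: hcard.
    exact: leq_ltn_trans (leq_subr 1 k) hcard.
  + by case: ifP hr => h0; [rewrite hk1 | rewrite prednK].
- apply: (@dist_set_le _ _ _ _ y).
  + rewrite inE; apply/forallP => j; move/forallP: hy => /(_ j).
    by [].
  + case: ifP => _; first exact: hcard.
    exact: leq_ltn_trans (leq_subr 1 k) hcard.
  + by case: ifP hwy => h0; [rewrite prednK | rewrite hk1].
Qed.
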